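(* Let $(D,\mathrm{left},\mathrm{right})$ be an interval domain, $x\in D$ and $p\in\max(D)$. If $x\ll p$ in $D$, then $\mathrm{left}(x)\ll p\ll\mathrm{right}(x)$ in the poset $(\max(D),\le)$.
   Context: For a poset $(P,\sqsubseteq)$: directed sets are nonempty sets in which any two elements have an upper bound in the set; $\bigsqcup S$ is the supremum; $x\ll y$ iff for every directed $S\subseteq P$ with a supremum, $y\sqsubseteq\bigsqcup S$ implies $x\sqsubseteq s$ for some $s\in S$; $\Uparrow x=\{a: x\ll a\}$, $\Downarrow x=\{a:a\ll x\}$. $P$ is continuous if there is $B\subseteq P$ such that for each $x$, $B\cap\Downarrow x$ contains a directed set with supremum $x$; a continuous dcpo is a continuous poset in which every directed set has a supremum. $\max(P)$ is the set of maximal elements, $x\sqcap y$ the infimum of $\{x,y\}$. The Scott topology consists of upper sets $U$ such that $\bigsqcup S\in U$ implies $S\cap U\ne\emptyset$ for directed $S$. An interval poset is a poset $D$ with functions $\mathrm{left},\mathrm{right}:D\to\max(D)$ such that (only named infima are assumed to exist): (i) $x=\mathrm{left}(x)\sqcap\mathrm{right}(x)$ for all $x$; (ii) if $\mathrm{right}(x)=\mathrm{left}(y)$ then $\mathrm{left}(x\sqcap y)=\mathrm{left}(x)$ and $\mathrm{right}(x\sqcap y)=\mathrm{right}(y)$; (iii) for $p\in\max(D)$ with $x\sqsubseteq p$: $\mathrm{left}(\mathrm{left}(x)\sqcap p)=\mathrm{left}(x)$, $\mathrm{right}(\mathrm{left}(x)\sqcap p)=p$, $\mathrm{left}(p\sqcap\mathrm{right}(x))=p$,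 $\mathrm{right}(p\sqcap\mathrm{right}(x))=\mathrm{right}(x)$. On $\max(D)$ define $a\le b$ iff $a=\mathrm{left}(z)$, $b=\mathrm{right}(z)$ for some $z\in D$; this is a partial order, and $\ll$, $\bigvee$, $\bigwedge$ in $(\max(D),\le)$ refer to this order. For $p,q\in\max(D)$ let $[p,\cdot]=\mathrm{left}^{-1}(p)$ and $[\cdot,q]=\mathrm{right}^{-1}(q)$, regarded as subposets of $D$. An interval domain is an interval poset $(D,\mathrm{left},\mathrm{right})$ such that $D$ is a continuous dcpo and: (i) if $p\in\Uparrow x\cap\max(D)$ then $\Uparrow(\mathrm{left}(x)\sqcap p)\ne\emptyset$ and $\Uparrow(p\sqcap\mathrm{right}(x))\ne\emptyset$; (ii) for all $x\in D$ the following are equivalent: (a) $\Uparrow x\ne\emptyset$; (b) for all $y\in[\mathrm{left}(x),\cdot]$ with $y\sqsubseteq x$, $y\ll\mathrm{right}(y)$ in the poset $[\cdot,\mathrm{right}(y)]$; (c) for all $y\in[\cdot,\mathrm{right}(x)]$ with $y\sqsubseteq x$, $y\ll\mathrm{left}(y)$ in the poset $[\mathrm{left}(y),\cdot]$; (iii)(a) for every directed $S\subseteq[p,\cdot]$, $\mathrm{left}(\bigsqcup S)=p$ and $\mathrm{right}(\bigsqcup S)=\mathrm{right}(\bigsqcup T)$ for every directed $T\subseteq[q,\cdot]$ with $\mathrm{right}(T)=\mathrm{right}(S)$ (images); (iii)(b) for every directed $S\subseteq[\cdot,q]$, $\mathrm{right}(\bigsqcup S)=q$ and $\mathrm{left}(\bigsqcup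 S)=\mathrm{left}(\bigsqcup T)$ for every directed $T\subseteq[\cdot,p]$ with $\mathrm{left}(T)=\mathrm{left}(S)$; (iv) for all $x\in D$, $\{y\in\max(D): x\sqsubseteq y\}$ is compact in the relative Scott topology. *)

(* Defs.v *)
From Stdlib Require Import List.

Section Defs.
Variable D : Type.

Definition is_poset (le : D -> D -> Prop) : Prop :=
  (forall x, le x x) /\
  (forall x y, le x y -> le y x -> x = y) /\
  (forall x y z, le x y -> le y z -> le x z).

Definition allD : D -> Prop := fun _ => True.

Definition directed (R : D -> D -> Prop) (S A : D -> Prop) : Prop :=
  (forall a, A a -> S a) /\ (exists a, A a) /\
  (forall a b, A a -> A b -> exists c, A c /\ R a c /\ R b c).

Definition is_sup (R : D -> D -> Prop) (S A : D -> Prop) (s : D) : Prop :=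
  S s /\ (forall a, A a -> R a s) /\
  (forall u, S u -> (forall a, A a -> R a u) -> R s u).

Definition waybelow (R : D -> D -> Prop) (S : D -> Prop) (x y : D) : Prop :=
  forall (A : D -> Prop) (s : D), directed R S A -> is_sup R S A s -> R y s ->
    exists a, A a /\ R x a.

Definition is_inf (le : D -> D -> Prop) (a b z : D) : Prop :=
  le z a /\ le z b /\ (forall w, le w a -> le w b -> le w z).

Definition is_max (le : D -> D -> Prop) (x : D) : Prop :=
  forall y, le x y -> y = x.

(* the order on max(D): a <= b iff a = left z, b = right z for some z *)
Definition maxle (left right : D -> D) (a b : D) : Prop :=
  exists z, left z = a /\ right z = b.

Definition interval_poset (le : D -> D -> Prop) (left right : D -> D) : Prop :=
  is_poset le /\
  (forall x, is_max le (left x) /\ is_max le (right x)) /\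
  (forall x, is_inf le (left x) (right x) x) /\
  (forall x y, right x = left y ->
     exists z, is_inf le x y z /\ left z = left x /\ right z = right y) /\
  (forall x p, is_max le p -> le x p ->
     (exists z, is_inf le (left x) p z /\ left z = left x /\ right z = p) /\
     (exists z, is_inf le p (right x) z /\ left z = p /\ right z = right x)).

Definition dcpo (le : D -> D -> Prop) : Prop :=
  forall A, directed le allD A -> exists s, is_sup le allD A s.

Definition continuous_poset (le : D -> D -> Prop) : Prop :=
  exists B : D -> Prop, forall x, exists A : D -> Prop,
    (forall a, A a -> B a /\ waybelow le allD a x) /\
    directed le allD A /\ is_sup le allD A x.

Definition scott_open (le : D -> D -> Prop) (U : D -> Prop) : Prop :=
  (forall a b, U a -> le a b -> U b) /\
  (forall A s, directed le allD A -> is_sup le allD A s -> U s ->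
     exists a, A a /\ U a).

Definition scott_compact (le : D -> D -> Prop) (K : D -> Prop) : Prop :=
  forall (I : Type) (U : I -> D -> Prop),
    (forall i, scott_open le (U i)) ->
    (forall k, K k -> exists i, U i k) ->
    exists l : list I, forall k, K k -> exists i, In i l /\ U i k.

Definition interval_domain (le : D -> D -> Prop) (left right : D -> D) : Prop :=
  interval_poset le left right /\
  dcpo le /\ continuous_poset le /\
  (forall x p, is_max le p -> waybelow le allD x p ->
     (forall z, is_inf le (left x) p z -> exists a, waybelow le allD z a) /\
     (forall z, is_inf le p (right x) z -> exists a, waybelow le allD z a)) /\
  (forall x,
     ((exists a, waybelow le allD x a) <->
      (forall y, left y = left x -> le y x ->
         waybelow le (fun z => right z = right y) y (right y))) /\
     ((exists a, waybelow le allD x a) <->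
      (forall y, right y = right x -> le y x ->
         waybelow le (fun z => left z = left y) y (left y)))) /\
  (forall p S s, directed le (fun z => left z = p) S -> is_sup le allD S s ->
     left s = p /\
     (forall q T t, directed le (fun z => left z = q) T -> is_sup le allD T t ->
        (forall r, (exists a, S a /\ right a = r) <-> (exists a, T a /\ right a = r)) ->
        right s = right t)) /\
  (forall q S s, directed le (fun z => right z = q) S -> is_sup le allD S s ->
     right s = q /\
     (forall p T t, directed le (fun z => right z = p) T -> is_sup le allD T t ->
        (forall r, (exists a, S a /\ left a = r) <-> (exists a, T a /\ left a = r)) ->
        left s = left t)) /\
  (forall x, scott_compact le (fun y => is_max le y /\ le x y)).

End Defs.
Arguments allD {D}.

(* Main.v *)
Require Import Defs.

Theorem mainTheorem9 (D : Type) (le : D -> D -> Prop) (left right : D -> D)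
  (HD : interval_domain D le left right) (x p : D) (Hp : is_max D le p)
  (Hxp : waybelow D le allD x p) :
  waybelow D (maxle D left right) (is_max D le) (left x) p /\
  waybelow D (maxle D left right) (is_max D le) p (right x).
Proof.
  destruct HD as [IP [Hdcpo [_ [Hi [Hii [_ [Hiiib _]]]]]]].
  destruct IP as [[Hrefl [Hanti Htrans]] [Hmax [Hinf [Hjoin Hext]]]].
  assert (Huniq : forall a b, left a = left b -> right a = right b -> a = b).
  { intros a b E1 E2. destruct (Hinf a) as [a1 [a2 a3]]. destruct (Hinf b) as [b1 [b2 b3]].
    apply Hanti.
    - apply b3; [rewrite <- E1 | rewrite <- E2]; assumption.
    - apply a3; [rewrite E1 | rewrite E2]; assumption. }
  assert (L2 : forall q1 q3, maxle D left right (left q1) (left q3) -> right q1 = right q3 -> le q1 q3).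
  { intros q1 q3 [w [Ew1 Ew2]] E.
    destruct (Hjoin w q3 Ew2) as [r [[r1 [r2 r3]] [Er1 Er2]]].
    assert (r = q1) by (apply Huniq; congruence). subst r. exact r2. }
  assert (L3 : forall z t, le z t -> maxle D left right (left z) (left t)).
  { intros z t Hzt. destruct (Hmax t) as [Mt _]. destruct (Hinf t) as [t1 _].
    destruct (Hext z (left t) Mt (Htrans _ _ _ Hzt t1)) as [[r [_ [Er1 Er2]]] _].
    exists r; auto. }
  assert (L4 : forall a b, is_max D le a -> maxle D left right a b -> maxle D left right b a -> a = b).
  { intros a b Ma [z1 [E11 E12]] [z2 [E21 E22]].
    assert (E : right z1 = left z2) by congruence.
    destruct (Hjoin z1 z2 E) as [r [[r1 [r2 r3]] [Er1 Er2]]].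
    destruct (Hinf r) as [_ [_ R3]].
    assert (Har : le a r) by (apply R3; rewrite ?Er1, ?Er2; congruence || (rewrite E11 || rewrite E22); apply Hrefl).
    destruct (Hinf z1) as [_ [Z12 _]].
    assert (le a b) by (rewrite <- E12; eauto).
    symmetry; apply Ma; assumption. }
  assert (Key : forall z, (exists c, waybelow D le allD z c) ->
     forall A s, directed D (maxle D left right) (is_max D le) A ->
       is_sup D (maxle D left right) (is_max D le) A s ->
       maxle D left right (right z) s -> exists a, A a /\ maxle D left right (left z) a).
  { intros z Hc A s [HAm [[a0 Ha0] HAd]] [Ms [Sub Sleast]] [w [Ew1 Ew2]].
    destruct (Hjoin z w (eq_sym Ew1)) as [y [[y1 [y2 y3]] [Ey1 Ey2]]].
    destruct (Hii z) as [[Hf _] _].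
    assert (Wy := Hf Hc y Ey1 y1). rewrite Ey2, Ew2 in Wy.
    set (T := fun q => right q = s /\ A (left q)).
    assert (HT : forall a, A a -> exists q, T q /\ left q = a).
    { intros a Ha. destruct (Sub a Ha) as [q [Eq1 Eq2]]. exists q. unfold T. rewrite Eq1. auto. }
    assert (Tdir : directed D le (fun q => right q = s) T).
    { split; [intros a [H _]; exact H|]. split.
      - destruct (HT a0 Ha0) as [q [Hq _]]; eauto.
      - intros q1 q2 [Hq1 A1] [Hq2 A2].
        destruct (HAd _ _ A1 A2) as [a3 [A3 [M1 M2]]].
        destruct (HT a3 A3) as [q3 [Tq3 Eq3]].
        exists q3. split; [exact Tq3|]. destruct Tq3 as [Tq3 _].
        split; apply L2; try congruence; rewrite Eq3; assumption. }
    assert (Tdir' : directed D le allD T).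
    { destruct Tdir as [_ [h1 h2]]. split; [intros; exact I|]. split; assumption. }
    destruct (Hdcpo T Tdir') as [t [_ [Tub Tleast]]].
    assert (Htsup : is_sup D le allD T t) by (split; [exact I|]; split; assumption).
    destruct (Hiiib s T t Tdir Htsup) as [Rt _].
    assert (Hub : forall a, A a -> maxle D left right a (left t)).
    { intros a Ha. destruct (HT a Ha) as [q [Tq Eq]]. rewrite <- Eq. apply L3. apply Tub; exact Tq. }
    assert (Lt : left t = s).
    { symmetry. apply L4; [exact Ms| |].
      - apply Sleast; [apply (proj1 (Hmax t)) | exact Hub].
      - exists t; auto. }
    assert (Hst : le s t).
    { destruct (Hinf t) as [_ [_ R3]]. apply R3; rewrite ?Lt, ?Rt; apply Hrefl. }
    destruct (Wy T t Tdir) as [q [Tq Hyq]].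
    + split; [exact Rt|]. split; [exact Tub|]. intros u _ Hu. apply Tleast; [exact I|exact Hu].
    + exact Hst.
    + destruct Tq as [_ Aq]. exists (left q). split; [exact Aq|]. rewrite <- Ey1. apply L3. exact Hyq. }
  assert (Hxle : le x p).
  { destruct (Hxp (fun a => a = p) p) as [a [Ea Hxa]].
    - split; [intros; exact I|]. split; [exists p; reflexivity|].
      intros a b Ea Eb; subst; exists p; auto.
    - split; [exact I|]. split; [intros a Ea; subst; apply Hrefl|]. intros u _ Hu. apply Hu; reflexivity.
    - apply Hrefl.
    - subst; exact Hxa. }
  destruct (Hext x p Hp Hxle) as [[z0 [Iz0 [Ez01 Ez02]]] [z1 [Iz1 [Ez11 Ez12]]]].
  destruct (Hi x p Hp Hxp) as [Hi1 Hi2].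
  split.
  - intros A s HA Hs Hps. rewrite <- Ez01. apply (Key z0 (Hi1 z0 Iz0) A s HA Hs). rewrite Ez02; exact Hps.
  - intros A s HA Hs Hps. rewrite <- Ez11. apply (Key z1 (Hi2 z1 Iz1) A s HA Hs). rewrite Ez12; exact Hps.
Qed.
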